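(* Let $\mathbb{F}$ be an algebraically closed field and let $n\ge 2$. Then there is no $n$-tuple $(B_1,\dots,B_n)$ of matrices in $M_n(\mathbb{F})$ that is strongly independent over $\mathbb{F}$.
   Context: An $n$-tuple $(B_1,\dots,B_n)$ of matrices in $M_n(\mathbb{F})$ is called strongly independent over $\mathbb{F}$ if for every nonzero column vector $v\in\mathbb{F}^{n\times 1}$, the vectors $B_1v,\dots,B_nv$ are linearly independent over $\mathbb{F}$. *)

(* Defs.v *)
From HB Require Import structures.
From mathcomp Require Import all_boot all_order all_algebra.
Set Implicit Arguments. Unset Strict Implicit. Unset Printing Implicit Defensive.
Import GRing.Theory.
Local Open Scope ring_scope.

Definition lin_indep (F : fieldType) (n m : nat) (w : 'I_m -> 'cV[F]_n) : Prop :=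
  forall c : 'I_m -> F, \sum_(i < m) c i *: w i = 0 -> forall i, c i = 0.

Definition strongly_independent (F : fieldType) (n : nat) (B : 'I_n -> 'M[F]_n) : Prop :=
  forall v : 'cV[F]_n, v != 0 -> lin_indep (fun i => B i *m v).

(* Main.v *)
Require Import Defs.
From mathcomp Require Import all_boot all_order all_algebra.
Local Open Scope ring_scope.
Import GRing.Theory.

Theorem theorem1p6 (F : closedFieldType) (n : nat) (hn : (2 <= n)%N) :
  ~ exists B : 'I_n -> 'M[F]_n, strongly_independent B.
Proof.
case=> B hS.
pose N (v : 'cV[F]_n) : 'M[F]_n := \matrix_(i, r) (B i *m v) r 0.
have key : forall v (c : 'rV[F]_n), c *m N v = 0 ->
    \sum_(i < n) c 0 i *: (B i *m v) = 0.
  move=> v c hc; apply/matrixP => r k; rewrite ord1 summxE !mxE.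
  have := congr1 (fun M : 'rV[F]_n => M 0 r) hc; rewrite !mxE => hc'.
  rewrite -[RHS]hc'; apply: eq_bigr => i _; rewrite !mxE.
  done.
have lin : forall (a : F) x y, N (a *: x - y) = a *: N x - N y.
  move=> a x y; apply/matrixP => i r.
  by rewrite /N [LHS]mxE mulmxBr -scalemxAr !mxE.
have hdet : forall v, v != 0 -> forall c : 'rV[F]_n, c *m N v = 0 -> c = 0.
  move=> v hv c hc; have := hS v hv (fun i => c 0 i) (key v c hc) => hz.
  by apply/matrixP => i j; rewrite ord1 hz mxE.
have h0 : (0 < n)%N by apply: leq_trans hn.
pose i0 : 'I_n := Ordinal h0.
pose i1 : 'I_n := Ordinal hn.
pose e1 : 'cV[F]_n := delta_mx i0 0.
pose e2 : 'cV[F]_n := delta_mx i1 0.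
have e1n0 : e1 != 0.
  apply/eqP => /matrixP /(_ i0 0); rewrite !mxE ?eqxx /=.
  by move/eqP; rewrite oner_eq0.
have U1 : N e1 \in unitmx.
  rewrite unitmxE unitfE; apply/negP => /det0P [c cn0 hc].
  by move: cn0; rewrite (hdet e1 e1n0 c hc) eqxx.
pose g := N e2 *m invmx (N e1).
have [a ha] : exists a, root (char_poly g) a.
  by apply/closed_rootP; rewrite size_char_poly; case: n hn {B hS N key lin hdet h0 i0 i1 e1 e2 e1n0 U1 g}.
rewrite -eigenvalue_root_char in ha.
case/eigenvalueP: ha => c hc cn0.
have vn0 : a *: e1 - e2 != 0.
  apply/eqP => /matrixP /(_ i1 0); rewrite !mxE /= ?eqxx /=.
  by rewrite mulr0 add0r => /eqP; rewrite oppr_eq0 oner_eq0.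
have : c *m N (a *: e1 - e2) = 0.
  rewrite lin mulmxBr -scalemxAr.
  have -> : N e2 = g *m N e1 by rewrite /g mulmxKV.
  by rewrite mulmxA hc -scalemxAl subrr.
move/(hdet _ vn0) => c0; by move: cn0; rewrite c0 eqxx.
Qed.
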